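(* Let $d>0$, let $\ell$ be a certified lower bound with certificate matrix $\Lambda=[\lambda_1|\cdots|\lambda_m]$, and suppose $f(d,\ell)=1$. Suppose $j\in\{1,\dots,m\}$ satisfies $0<a_j^\top y(d,\ell)-u_j\le\gamma_j(d,\ell)$, and that in addition $-\lambda_j^\top u\ge L_j:=a_j^\top y(d,\ell)-\gamma_j(d,\ell)$. Define $\ell^{(1)}:=\ell-\frac{2(t_j(d,\ell)-v_j(\ell))}{d_j\gamma_j(d,\ell)^2}e_j$ and suppose $f(d,\ell^{(1)})>0$. Define $d^{(1)}:=d/f(d,\ell^{(1)})$, $$\ell^{(2)}:=\ell^{(1)}+\frac{2\big(2v_j(\ell^{(1)})-\gamma_j(d^{(1)},\ell^{(1)})\big)}{(m-1)d^{(1)}_j\gamma_j(d^{(1)},\ell^{(1)})^2+2}e_j,\qquad d^{(2)}:=d^{(1)}+\frac{2}{m-1}\frac{1}{\gamma_j(d^{(1)},\ell^{(1)})^2}e_j,$$ and $d^{(3)}:=d^{(2)}/f(d^{(2)},\ell^{(2)})$. Then: (a) $\ell^{(2)}_j\le\max\{\ell_j,L_j\}$, and hence $\ell^{(2)}$ is a certified lower bound with certificate matrix $\Lambda$; (b) $\gamma_j(d^{(1)},\ell^{(1)})>0$ (so $\ell^{(2)}$ and $d^{(2)}$ are well defined); (c) $f(d^{(2)},\ell^{(2)})=\frac{m^2}{m^2-1}$, i.e. $d^{(3)}=\frac{m^2-1}{m^2}\Big(d^{(1)}+\frac{2}{m-1}\frac{1}{\gamma_j(d^{(1)},\ell^{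(1)})^2}e_j\Big)$.
   Context: Standing assumption: $A=[a_1|\cdots|a_m]\in\mathbb{R}^{n\times m}$ has columns of unit Euclidean norm and $\{A\lambda:\lambda\ge0\}=\mathbb{R}^n$ (so $m>n\ge1$); $u\in\mathbb{R}^m$. $D=\mathrm{diag}(d)$; $r(\ell)=\tfrac12(u+\ell)$, $v(\ell)=\tfrac12(u-\ell)$, $B(d)=ADA^\top$, $y(d,\ell)=B(d)^{-1}ADr(\ell)$, $t(d,\ell)=A^\top y(d,\ell)-r(\ell)$, $f(d,\ell)=v(\ell)^\top Dv(\ell)-t(d,\ell)^\top Dt(d,\ell)$, $\gamma_i(d,\ell)=\sqrt{f(d,\ell)a_i^\top B(d)^{-1}a_i}$ when $f(d,\ell)>0$. $\ell$ is a certified lower bound with certificate matrix $\Lambda\in\mathbb{R}^{m\times m}$ if $A\Lambda=-A$, $\Lambda\ge0$, $-\Lambda^\top u\ge\ell$. *)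

(* Defs.v *)
From HB Require Import structures.
From mathcomp Require Import all_boot all_order all_algebra.
Set Implicit Arguments. Unset Strict Implicit. Unset Printing Implicit Defensive.
Import Order.TTheory GRing.Theory Num.Theory.
Local Open Scope ring_scope.

Section Defs.
Variables (R : rcfType) (n m : nat).
Implicit Types (A : 'M[R]_(n, m)) (u d l : 'cV[R]_m).

Definition unit_columns A : Prop :=
  forall j : 'I_m, \sum_(i < n) (A i j) ^+ 2 = 1.

Definition positively_spanning A : Prop :=
  forall x : 'cV[R]_n, exists lam : 'cV[R]_m,
    (forall i, 0 <= lam i 0) /\ A *m lam = x.

Definition Dmx d : 'M[R]_m := diag_mx d^T.
Definition rvec u l : 'cV[R]_m := 2^-1 *: (u + l).
Definition vvec u l : 'cV[R]_m := 2^-1 *: (u - l).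
Definition Bmx A d : 'M[R]_n := A *m Dmx d *m A^T.
Definition yvec A u d l : 'cV[R]_n := invmx (Bmx A d) *m A *m Dmx d *m rvec u l.
Definition tvec A u d l : 'cV[R]_m := A^T *m yvec A u d l - rvec u l.
Definition fval A u d l : R :=
  ((vvec u l)^T *m Dmx d *m vvec u l) 0 0
  - ((tvec A u d l)^T *m Dmx d *m tvec A u d l) 0 0.
(* gamma_i(d,l) = sqrt(f(d,l) a_i^T B(d)^{-1} a_i); only used where f(d,l) > 0 *)
Definition gammaj A u d l (i : 'I_m) : R :=
  Num.sqrt (fval A u d l * ((col i A)^T *m invmx (Bmx A d) *m col i A) 0 0).

Definition certified A u l (Lam : 'M[R]_m) : Prop :=
  A *m Lam = - A /\ (forall i k, 0 <= Lam i k) /\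
  (forall i, l i 0 <= (- (Lam^T *m u)) i 0).

Definition evec (j : 'I_m) : 'cV[R]_m := delta_mx j 0.
End Defs.
Arguments evec {R m}.

(* Main.v *)
Require Import Defs.
From HB Require Import structures.
From mathcomp Require Import all_boot all_order all_algebra.
From mathcomp Require Import ring lra.
Import Order.TTheory GRing.Theory Num.Theory.
Local Open Scope ring_scope.

Section Helpers.
Context {R : rcfType} {n m : nat} (A : 'M[R]_(n, m)) (u : 'cV[R]_m).

Definition gfun (d l : 'cV[R]_m) (y : 'cV[R]_n) : R :=
  \sum_i d i 0 * ((A^T *m y) i 0 - u i 0) * (l i 0 - (A^T *m y) i 0).
Definition qf (d : 'cV[R]_m) (x z : 'cV[R]_n) : R :=
  \sum_i d i 0 * (A^T *m x) i 0 * (A^T *m z) i 0.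

Lemma dmxE (d x z : 'cV[R]_m) :
  (x^T *m Dmx d *m z) 0 0 = \sum_i d i 0 * x i 0 * z i 0.
Proof.
rewrite /Dmx mul_mx_diag mxE; apply: eq_bigr => i _.
by rewrite !mxE (mulrC (x i 0)).
Qed.

Lemma BmxT (d : 'cV[R]_m) : (Bmx A d)^T = Bmx A d.
Proof. by rewrite /Bmx !trmx_mul trmxK /Dmx tr_diag_mx mulmxA. Qed.

Lemma qf_mx (d : 'cV[R]_m) x z : (x^T *m Bmx A d *m z) 0 0 = qf d x z.
Proof.
rewrite /qf -dmxE /Bmx trmx_mul trmxK !mulmxA //.
Qed.

Lemma colTE (M : 'M[R]_(n, m)) (j : 'I_m) (y : 'cV[R]_n) :
  ((col j M)^T *m y) 0 0 = (M^T *m y) j 0.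
Proof. by rewrite tr_col -row_mul mxE. Qed.

Lemma colTE' (M : 'M[R]_m) (j : 'I_m) (y : 'cV[R]_m) :
  ((col j M)^T *m y) 0 0 = (M^T *m y) j 0.
Proof. by rewrite tr_col -row_mul mxE. Qed.

Lemma qf_ge0 (d : 'cV[R]_m) (Hd : forall i, 0 < d i 0) x : 0 <= qf d x x.
Proof.
apply: sumr_ge0 => i _; rewrite -mulrA mulr_ge0 ?sqr_ge0 //.
exact: ltW.
Qed.

Lemma Bunit (d : 'cV[R]_m) (Hd : forall i, 0 < d i 0) :
  positively_spanning A -> Bmx A d \in unitmx.
Proof.
move=> HA; rewrite -row_free_unit; apply: inj_row_free => v Hv.
have H0 : qf d v^T v^T = 0.
  by rewrite -qf_mx trmxK Hv mul0mx mxE.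
have HAv : forall i, (A^T *m v^T) i 0 = 0.
  have Hge : forall k : 'I_m, true -> 0 <= d k 0 * (A^T *m v^T) k 0 * (A^T *m v^T) k 0.
    by move=> k _; rewrite -mulrA mulr_ge0 ?sqr_ge0 ?ltW.
  move=> i; rewrite /qf in H0; have := @psumr_eq0P _ _ xpredT _ Hge H0 i isT.
  by move/eqP; rewrite -mulrA mulf_eq0 (gt_eqF (Hd i)) /= mulf_eq0 orbb => /eqP.
have HvA : v *m A = 0.
  apply: trmx_inj; rewrite trmx_mul trmx0; apply/matrixP => i k.
  by rewrite (ord1 k) HAv mxE.
have [lam [_ Hlam]] := HA v^T.
have Hvv : v *m v^T = 0 by rewrite -Hlam mulmxA HvA mul0mx.
have Hs : \sum_i v 0 i ^+ 2 = 0.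
  have H : (v *m v^T) 0 0 = 0 by rewrite Hvv mxE.
  rewrite mxE in H; rewrite -[X in _ = X]H.
  by apply: eq_bigr => i _; rewrite mxE expr2.
apply/rowP => i; rewrite mxE.
have := @psumr_eq0P _ _ xpredT _ (fun k _ => sqr_ge0 (v 0 k)) Hs i isT.
by move/eqP; rewrite sqrf_eq0 => /eqP.
Qed.

Lemma ADt0 (d l : 'cV[R]_m) : Bmx A d \in unitmx ->
  A *m Dmx d *m tvec A u d l = 0.
Proof.
move=> HB; rewrite /tvec mulmxBr mulmxA -/(Bmx A d) /yvec.
by rewrite !mulmxA mulmxV // mul1mx subrr.
Qed.

Lemma tDAw (d l : 'cV[R]_m) (w : 'cV[R]_n) : Bmx A d \in unitmx ->
  \sum_i d i 0 * tvec A u d l i 0 * (A^T *m w) i 0 = 0.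
Proof.
move=> HB; rewrite -dmxE.
have -> : (tvec A u d l)^T *m Dmx d *m (A^T *m w)
   = (A *m Dmx d *m tvec A u d l)^T *m w.
  by rewrite !trmx_mul /Dmx tr_diag_mx !mulmxA.
by rewrite ADt0 // trmx0 mul0mx mxE.
Qed.

Lemma key (d l : 'cV[R]_m) (y : 'cV[R]_n) : Bmx A d \in unitmx ->
  gfun d l y = fval A u d l - qf d (y - yvec A u d l) (y - yvec A u d l).
Proof.
move=> HB.
set yc := yvec A u d l.
have Htw := tDAw d l (y - yc) HB.
have Ht : forall i, tvec A u d l i 0 = (A^T *m yc) i 0 - 2^-1 * (u i 0 + l i 0).
  move=> i; rewrite /tvec /rvec !mxE; reflexivity.
have Hv : forall i, vvec u l i 0 = 2^-1 * (u i 0 - l i 0).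
  by move=> i; rewrite /vvec !mxE.
have Hw : forall i, (A^T *m (y - yc)) i 0 = (A^T *m y) i 0 - (A^T *m yc) i 0.
  by move=> i; rewrite mulmxDr mulmxN !mxE.
rewrite /fval !dmxE /qf /gfun.
rewrite (eq_bigr (fun i => d i 0 * vvec u l i 0 * vvec u l i 0
   - d i 0 * tvec A u d l i 0 * tvec A u d l i 0
   - d i 0 * (A^T *m (y - yc)) i 0 * (A^T *m (y - yc)) i 0
   - 2 * (d i 0 * tvec A u d l i 0 * (A^T *m (y - yc)) i 0))); last first.
  by move=> i _; rewrite !Ht !Hv !Hw; field.
by rewrite !sumrB -mulr_sumr Htw mulr0 subr0.
Qed.

Lemma fval_ge (d l : 'cV[R]_m) (Hd : forall i, 0 < d i 0) y :
  Bmx A d \in unitmx -> gfun d l y <= fval A u d l.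
Proof. by move=> HB; rewrite key // lerBlDr lerDl qf_ge0. Qed.

Lemma fval_at (d l : 'cV[R]_m) : Bmx A d \in unitmx ->
  gfun d l (yvec A u d l) = fval A u d l.
Proof.
move=> HB; rewrite key // subrr /qf big1 ?subr0 // => i _.
by rewrite mulmx0 mxE mulr0.
Qed.

Lemma fval_char (d l : 'cV[R]_m) (Hd : forall i, 0 < d i 0) (V : R) y0 :
  Bmx A d \in unitmx -> (forall y, gfun d l y <= V) -> V <= gfun d l y0 ->
  fval A u d l = V.
Proof.
move=> HB Hle Hge; apply/eqP; rewrite eq_le; apply/andP; split.
  by rewrite -(fval_at d l HB).
exact: (le_trans Hge (fval_ge d l Hd y0 HB)).
Qed.

Lemma gfunZ (k : R) (d l : 'cV[R]_m) y : gfun (k *: d) l y = k * gfun d l y.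
Proof.
rewrite /gfun mulr_sumr; apply: eq_bigr => i _; by rewrite mxE !mulrA.
Qed.

Lemma DmxZ (k : R) (d : 'cV[R]_m) : Dmx (k *: d) = k *: Dmx d.
Proof. by apply/matrixP=> i k'; rewrite !mxE mulrnAr. Qed.

Lemma BmxZ (k : R) (d : 'cV[R]_m) : Bmx A (k *: d) = k *: Bmx A d.
Proof. by rewrite /Bmx DmxZ -scalemxAr -scalemxAl. Qed.

Lemma gupd (d l d' l' : 'cV[R]_m) (j : 'I_m) y :
  (forall i, i != j -> d' i 0 = d i 0) -> (forall i, i != j -> l' i 0 = l i 0) ->
  gfun d' l' y = gfun d l y
    - d j 0 * ((A^T *m y) j 0 - u j 0) * (l j 0 - (A^T *m y) j 0)
    + d' j 0 * ((A^T *m y) j 0 - u j 0) * (l' j 0 - (A^T *m y) j 0).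
Proof.
move=> Hd Hl; rewrite /gfun (bigD1 j) //= [in RHS](bigD1 j) //=.
rewrite (eq_bigr (fun i => d i 0 * ((A^T *m y) i 0 - u i 0) * (l i 0 - (A^T *m y) i 0))); last first.
  by move=> i Hi; rewrite Hd // Hl.
ring.
Qed.

Definition hvec (d : 'cV[R]_m) (j : 'I_m) := invmx (Bmx A d) *m col j A.
Definition betaj (d : 'cV[R]_m) (j : 'I_m) :=
  ((col j A)^T *m invmx (Bmx A d) *m col j A) 0 0.

Lemma ATZ (k : R) (z : 'cV[R]_n) i : (A^T *m (k *: z)) i 0 = k * (A^T *m z) i 0.
Proof. by rewrite -scalemxAr mxE. Qed.

Lemma ATD (x z : 'cV[R]_n) i : (A^T *m (x + z)) i 0 = (A^T *m x) i 0 + (A^T *m z) i 0.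
Proof. by rewrite mulmxDr mxE. Qed.

Lemma ATB (x z : 'cV[R]_n) i : (A^T *m (x - z)) i 0 = (A^T *m x) i 0 - (A^T *m z) i 0.
Proof. by rewrite mulmxDr mulmxN !mxE. Qed.

Lemma qf_h_w (d : 'cV[R]_m) j w : Bmx A d \in unitmx ->
  qf d (hvec d j) w = (A^T *m w) j 0.
Proof.
move=> HB; rewrite -qf_mx.
have -> : (hvec d j)^T *m Bmx A d = (col j A)^T.
  by rewrite -[Bmx A d in LHS]BmxT -trmx_mul /hvec mulmxA mulmxV // mul1mx.
exact: colTE.
Qed.

Lemma qf_h_h (d : 'cV[R]_m) j : Bmx A d \in unitmx ->
  qf d (hvec d j) (hvec d j) = betaj d j.
Proof. by move=> HB; rewrite qf_h_w // -colTE /betaj /hvec mulmxA. Qed.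

Lemma qfZ (d : 'cV[R]_m) (k : R) z : qf d (k *: z) (k *: z) = k ^+ 2 * qf d z z.
Proof.
rewrite /qf mulr_sumr; apply: eq_bigr => i _; rewrite !ATZ; ring.
Qed.

Lemma qf_exp (d : 'cV[R]_m) (k : R) x z :
  qf d (x + k *: z) (x + k *: z) = qf d x x + 2 * k * qf d z x + k ^+ 2 * qf d z z.
Proof.
rewrite /qf !mulr_sumr -!big_split /=; apply: eq_bigr => i _; rewrite !ATD !ATZ; ring.
Qed.

Lemma CS (d : 'cV[R]_m) (Hd : forall i, 0 < d i 0) j w (tau : R) :
  Bmx A d \in unitmx ->
  2 * tau * (A^T *m w) j 0 - tau ^+ 2 * betaj d j <= qf d w w.
Proof.
move=> HB; have := qf_ge0 d Hd (w + (- tau) *: hvec d j).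
rewrite qf_exp qf_h_w // qf_h_h //.
move=> H; rewrite -subr_ge0; apply: (le_trans H); rewrite le_eqVlt; apply/orP; left; apply/eqP.
ring.
Qed.

Lemma mBE p q (M N : 'M[R]_(p, q)) i k : (M - N) i k = M i k - N i k.
Proof. by rewrite !mxE. Qed.
Lemma mDE p q (M N : 'M[R]_(p, q)) i k : (M + N) i k = M i k + N i k.
Proof. by rewrite !mxE. Qed.
Lemma mZE p q (c : R) (M : 'M[R]_(p, q)) i k : (c *: M) i k = c * M i k.
Proof. by rewrite !mxE. Qed.

Lemma mNE p q (M : 'M[R]_(p, q)) i k : (- M) i k = - M i k.
Proof. by rewrite !mxE. Qed.

Lemma eqle (a b : R) : a = b -> a <= b.
Proof. by move->. Qed.

Lemma fvalZ (d l : 'cV[R]_m) (Hd : forall i, 0 < d i 0) (k : R) :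
  positively_spanning A -> 0 < k -> fval A u (k *: d) l = k * fval A u d l.
Proof.
move=> HA Hk.
have Hkd : forall i, 0 < (k *: d) i 0 by move=> i; rewrite mxE mulr_gt0.
have HB := Bunit d Hd HA; have HBk := Bunit (k *: d) Hkd HA.
apply: (fval_char (k *: d) l Hkd _ (yvec A u d l) HBk).
  by move=> y; rewrite gfunZ ler_pM2l // fval_ge.
by rewrite gfunZ fval_at.
Qed.

Lemma evecE (j i : 'I_m) : evec j i 0 = (i == j)%:R :> R.
Proof. by rewrite /evec mxE eqxx andbT. Qed.
End Helpers.

Ltac nz := repeat (apply/andP; split); try (apply: lt0r_neq0; done).

Theorem lemma6 (R : rcfType) (n m : nat) (A : 'M[R]_(n, m)) (u : 'cV[R]_m)
  (Hn : (0 < n)%N) (Hnm : (n < m)%N)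
  (HA1 : unit_columns A) (HA2 : positively_spanning A)
  (d l : 'cV[R]_m) (Lam : 'M[R]_m) (j : 'I_m)
  (Hd : forall i, 0 < d i 0)
  (Hcert : certified A u l Lam)
  (Hf : fval A u d l = 1)
  (Hj1 : 0 < ((col j A)^T *m yvec A u d l) 0 0 - u j 0)
  (Hj2 : ((col j A)^T *m yvec A u d l) 0 0 - u j 0 <= gammaj A u d l j)
  (Lj : R) (HLj : Lj = ((col j A)^T *m yvec A u d l) 0 0 - gammaj A u d l j)
  (HLam : Lj <= - ((col j Lam)^T *m u) 0 0)
  (l1 : 'cV[R]_m)
  (Hl1 : l1 = l - ((2 * (tvec A u d l j 0 - vvec u l j 0))
                   / (d j 0 * gammaj A u d l j ^+ 2)) *: evec j)
  (Hf1 : 0 < fval A u d l1)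
  (d1 : 'cV[R]_m) (Hd1 : d1 = (fval A u d l1)^-1 *: d)
  (l2 : 'cV[R]_m)
  (Hl2 : l2 = l1 + ((2 * (2 * vvec u l1 j 0 - gammaj A u d1 l1 j))
                    / ((m - 1)%N%:R * d1 j 0 * gammaj A u d1 l1 j ^+ 2 + 2)) *: evec j)
  (d2 : 'cV[R]_m)
  (Hd2 : d2 = d1 + (2 / (m - 1)%N%:R * (gammaj A u d1 l1 j ^+ 2)^-1) *: evec j)
  (d3 : 'cV[R]_m) (Hd3 : d3 = (fval A u d2 l2)^-1 *: d2) :
  (l2 j 0 <= Num.max (l j 0) Lj /\ certified A u l2 Lam)
  /\ 0 < gammaj A u d1 l1 j
  /\ (fval A u d2 l2 = (m ^ 2)%N%:R / ((m ^ 2)%N%:R - 1)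
      /\ d3 = (((m ^ 2)%N%:R - 1) / (m ^ 2)%N%:R)
              *: (d1 + (2 / (m - 1)%N%:R * (gammaj A u d1 l1 j ^+ 2)^-1) *: evec j)).
Proof.
have HB := Bunit A d Hd HA2.
have Hm1 : (1 < m)%N by apply: leq_ltn_trans Hnm.
set yc := yvec A u d l in Hj1 Hj2 HLj Hl1 *.
rewrite colTE in Hj1 Hj2 HLj.
set Yc := (A^T *m yc) j 0 in Hj1 Hj2 HLj *.
set s := Yc - u j 0 in Hj1 Hj2 HLj.
have HYc : Yc = u j 0 + s by rewrite /s addrC subrK.
set be := betaj A d j.
have Hgam : gammaj A u d l j = Num.sqrt be by rewrite /gammaj Hf mul1r.
rewrite Hgam in Hj2 HLj Hl1.
set ga := Num.sqrt be in Hj2 HLj Hl1 *.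
have Hga0 : 0 < ga by apply: lt_le_trans Hj2.
have Hbe : 0 < be by rewrite -sqrtr_gt0.
have Hga2 : ga ^+ 2 = be by rewrite sqr_sqrtr // ltW.
have Htv : tvec A u d l j 0 - vvec u l j 0 = s.
  rewrite /tvec /vvec /rvec !(mBE, mDE, mZE) -/yc -/Yc /s; by field.
rewrite Htv in Hl1.
have Hdj := Hd j.
have Hl1j : l1 j 0 = l j 0 - 2 * s / (d j 0 * be).
  by rewrite Hl1 !(mBE, mDE, mZE) evecE eqxx mulr1 Hga2.
have Hl1i : forall i, i != j -> l1 i 0 = l i 0.
  by move=> i Hi; rewrite Hl1 !(mBE, mDE, mZE) evecE (negPf Hi) mulr0 subr0.
set h := hvec A d j.
have HAh : (A^T *m h) j 0 = be by rewrite -(qf_h_w A d j) // qf_h_h.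
have Hg1 : forall y, gfun A u d l1 y
    = 1 - qf A d (y - yc) (y - yc) - 2 * s / be * ((A^T *m y) j 0 - u j 0).
  move=> y; rewrite (gupd A u d l d l1 j y (fun _ _ => erefl) Hl1i).
  rewrite key // Hf Hl1j; field; nz.
set f1 := fval A u d l1 in Hf1 Hd1 *.
have Hy0 : forall k, (yc + k *: h) - yc = k *: h.
  by move=> k; rewrite addrAC subrr add0r.
have Hf1v : f1 = 1 - s ^+ 2 / be.
  apply: (fval_char A u d l1 Hd _ (yc + (- (s / be)) *: h) HB).
    move=> y; rewrite Hg1.
    have := CS A d Hd j (y - yc) (- (s / be)) HB.
    rewrite ATB -/yc -/Yc -/be HYc.
    set Q := qf A d (y - yc) (y - yc); set Y := (A^T *m y) j 0.
    move=> HQ; rewrite -subr_ge0.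
    have -> : 1 - s ^+ 2 / be - (1 - Q - 2 * s / be * (Y - u j 0))
       = Q - (2 * - (s / be) * (Y - (u j 0 + s)) - (- (s / be)) ^+ 2 * be).
      by field; nz.
    by rewrite subr_ge0.
  rewrite Hg1 Hy0 qfZ qf_h_h // -/be ATD ATZ HAh -/Yc HYc.
  by apply: eqle; field; nz.
have Hbe0 : be != 0 by apply: lt0r_neq0.
have Hf10 : f1 != 0 by apply: lt0r_neq0.
have Hf1be : f1 * be = be - s ^+ 2 by rewrite Hf1v; field.
have Hd1pos : forall i, 0 < d1 i 0.
  by move=> i; rewrite Hd1 mZE mulr_gt0 ?invr_gt0.
have HB1 := Bunit A d1 Hd1pos HA2.
have Hfd1 : fval A u d1 l1 = 1.
  by rewrite Hd1 (fvalZ A u d l1 Hd) ?invr_gt0 // mulVf.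
have Hbe1 : betaj A d1 j = f1 * be.
  rewrite /betaj Hd1 BmxZ invmxZ; last by rewrite -BmxZ -Hd1.
  by rewrite invrK -scalemxAr -scalemxAl mZE.
have Hga1 : gammaj A u d1 l1 j = Num.sqrt (f1 * be).
  by rewrite /gammaj Hfd1 mul1r -Hbe1.
rewrite Hga1 in Hl2 Hd2 *.
set G := Num.sqrt (f1 * be) in Hl2 Hd2 *.
have Hf1bep : 0 < f1 * be by rewrite mulr_gt0.
have HG0 : 0 < G by rewrite sqrtr_gt0.
have HG2 : G ^+ 2 = be - s ^+ 2 by rewrite /G sqr_sqrtr -?Hf1be // ltW.
have HM : (m - 1)%:R = m%:R - 1 :> R by rewrite natrB // ltnW.
set M := (m - 1)%:R in Hl2 Hd2 HM *.
have HM0 : 0 < M by rewrite /M ltr0n subn_gt0.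
have Hmm : (m ^ 2)%:R = (M + 1) ^+ 2 :> R by rewrite natrX HM subrK.
rewrite Hmm.
set c := 2 / M / G ^+ 2 in Hd2 *.
have Hc : 0 < c by rewrite /c !divr_gt0 // exprn_gt0.
have Hd1j : d1 j 0 = f1^-1 * d j 0 by rewrite Hd1 mZE.
have Hd2j : d2 j 0 = d1 j 0 + c by rewrite Hd2 mDE mZE evecE eqxx mulr1.
have Hd2i : forall i, i != j -> d2 i 0 = d1 i 0.
  by move=> i Hi; rewrite Hd2 mDE mZE evecE (negPf Hi) mulr0 addr0.
set del := 2 * (2 * vvec u l1 j 0 - G) / (M * d1 j 0 * G ^+ 2 + 2) in Hl2.
have Hl2j : l2 j 0 = l1 j 0 + del by rewrite Hl2 mDE mZE evecE eqxx mulr1.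
have Hl2i : forall i, i != j -> l2 i 0 = l1 i 0.
  by move=> i Hi; rewrite Hl2 mDE mZE evecE (negPf Hi) mulr0 addr0.
have Hv1 : 2 * vvec u l1 j 0 = u j 0 - l1 j 0 by rewrite /vvec mZE mBE; field.
have HdG : M * d1 j 0 * G ^+ 2 = M * (d j 0 * be).
  by rewrite Hd1j HG2 -Hf1be; field.
have Hdel : del = 2 * (u j 0 - l1 j 0 - G) / (M * (d j 0 * be) + 2).
  by rewrite /del Hv1 HdG.
have HK : 2 <= M * (d j 0 * be) + 2.
  by rewrite lerDr mulr_ge0 // ?mulr_ge0 // ltW.
have HGg : ga - s <= G.
  have HG2' : G ^+ 2 = ga ^+ 2 - s ^+ 2 by rewrite HG2 Hga2.
  nra.
have Hl2le : l2 j 0 <= Num.max (l j 0) Lj.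
  rewrite Hl2j Hdel.
  set mx := Num.max _ _.
  set K := M * (d j 0 * be) + 2 in HK *.
  have HK0 : 0 < K by apply: lt_le_trans HK.
  have H1 : l1 j 0 <= mx.
    rewrite le_max; apply/orP; left; rewrite Hl1j lerBlDr lerDl.
    by rewrite divr_ge0 ?mulr_ge0 // ltW.
  have H2 : u j 0 - G <= mx.
    rewrite le_max; apply/orP; right; rewrite HLj HYc; lra.
  have H3 : 2 / K <= 1 by rewrite ler_pdivrMr // mul1r.
  rewrite -subr_ge0.
  have -> : mx - (l1 j 0 + 2 * (u j 0 - l1 j 0 - G) / K)
     = (1 - 2 / K) * (mx - l1 j 0) + (2 / K) * (mx - (u j 0 - G)).
    by field; nz.
  by rewrite addr_ge0 // mulr_ge0 ?subr_ge0 ?divr_ge0 // ltW.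
have [HAL [HLp Hle]] := Hcert.
have Hcl2 : certified A u l2 Lam.
  split; first exact: HAL.
  split; first exact: HLp.
  move=> i; case: (eqVneq i j) => [->|Hi].
    apply: (le_trans Hl2le); rewrite ge_max Hle /=.
    by apply: (le_trans HLam); rewrite colTE' mNE.
  by rewrite Hl2i // Hl1i.
have Hd2pos : forall i, 0 < d2 i 0.
  move=> i; case: (eqVneq i j) => [->|Hi].
    by rewrite Hd2j addr_gt0.
  by rewrite Hd2i.
have HB2 := Bunit A d2 Hd2pos HA2.
have Hg2 : forall y, gfun A u d2 l2 y
  = f1^-1 * (1 - qf A d (y - yc) (y - yc) - 2 * s / be * ((A^T *m y) j 0 - u j 0))
    - d1 j 0 * ((A^T *m y) j 0 - u j 0) * (l1 j 0 - (A^T *m y) j 0)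
    + d2 j 0 * ((A^T *m y) j 0 - u j 0) * (l2 j 0 - (A^T *m y) j 0).
  move=> y; rewrite (gupd A u d1 l1 d2 l2 j y Hd2i Hl2i).
  by rewrite {1}Hd1 gfunZ Hg1.
have HbeG : be = G ^+ 2 + s ^+ 2 by rewrite HG2; ring.
have HGs : G ^+ 2 + s ^+ 2 != 0 by rewrite -HbeG.
have HG0' : G != 0 by apply: lt0r_neq0.
have HM0' : M != 0 by apply: lt0r_neq0.
have HM2 : M + 2 != 0 by apply: lt0r_neq0; rewrite addr_gt0.
have Hdj0 : d j 0 != 0 by apply: lt0r_neq0.
have HMM : (M + 1) ^+ 2 - 1 != 0.
  by apply: lt0r_neq0; rewrite subr_gt0 -[X in X < _](expr1n _ 2) ltrXn2r // ltrDr.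
have HKd : M * (d j 0 * (G ^+ 2 + s ^+ 2)) + 2 != 0.
  by apply: lt0r_neq0; rewrite -HbeG; apply: lt_le_trans HK.
set T := (M + 1) ^+ 2 / ((M + 1) ^+ 2 - 1).
have Hf2 : fval A u d2 l2 = T.
  apply: (fval_char A u d2 l2 Hd2pos _ (yc + ((- (G / (M + 2)) - s) / be) *: h) HB2).
    move=> y; rewrite Hg2 Hd2j Hl2j Hdel Hd1j Hl1j.
    have := CS A d Hd j (y - yc) (((A^T *m y) j 0 - Yc) / be) HB.
    rewrite ATB -/yc -/Yc -/be.
    set Q := qf A d (y - yc) (y - yc); set Y := (A^T *m y) j 0.
    move=> HQ; rewrite -subr_ge0.
    set e := T - _.
    have -> : e = f1^-1 * (Q - (2 * ((Y - Yc) / be) * (Y - Yc) - ((Y - Yc) / be) ^+ 2 * be))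
        + (M + 2) / (M * G ^+ 2) * (Y - u j 0 + G / (M + 2)) ^+ 2.
      rewrite /e /T /c Hf1v HYc HbeG; field.
      by rewrite -/M ?addrK ?expf_neq0 ?HM2 ?HG0' ?HM0' ?HGs ?HKd ?Hdj0 ?HMM.
    have HM2' : 0 <= M + 2 by rewrite addr_ge0 // ltW.
    have HMG : 0 <= M * G ^+ 2 by rewrite mulr_ge0 ?exprn_ge0 // ltW.
    apply: addr_ge0; apply: mulr_ge0.
    - by rewrite invr_ge0 ltW.
    - by rewrite subr_ge0.
    - exact: divr_ge0.
    - exact: sqr_ge0.
  rewrite Hg2 Hy0 qfZ qf_h_h // -/be ATD ATZ HAh -/Yc.
  rewrite Hd2j Hl2j Hdel Hd1j Hl1j.
  apply: eqle; rewrite /T /c Hf1v HYc HbeG; field.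
  by rewrite -/M ?addrK ?expf_neq0 ?HM2 ?HG0' ?HM0' ?HGs ?HKd ?Hdj0 ?HMM.
split; first by split.
split; first exact: HG0.
split; first exact: Hf2.
by rewrite Hd3 Hf2 Hd2 /T invf_div.
Qed.
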